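(* Let $X$ be a Banach space, $T>0$, $p\in\{1,2\}$ the order of the BDF method used (BDF1 or BDF2), and $r\in\{1,\dots,p\}$. Let $f\in C^r([0,T];X)$ and $\widetilde f\in C([0,T];X)$ with $0=f(0)=f'(0)=\dots=f^{(r-1)}(0)=\widetilde f(0)$ (both extended by zero to negative times). Then for all $n$ with $t=t_n=n\Delta t\le T$, $$\big\|(\partial_t^{-1}f)(t)-[(\partial_t^{\Delta t})^{-1}\widetilde f]^n\big\|_X\le Ct\Big[(\Delta t)^r\max_{\tau\in[0,t]}\|f^{(r)}(\tau)\|_X+\max_{\tau\in[0,t]}\|f(\tau)-\widetilde f(\tau)\|_X\Big].$$
   Context: $\partial_t^{-1}f(t)=\int_0^tf(\xi)\,d\xi$. Convolution quadrature: BDF1 has $\delta(z)=1-z$, BDF2 has $\delta(z)=\frac32-2z+\frac12z^2$; the weights $w_j$ are defined by $\frac{\Delta t}{\delta(z)}=\sum_{j\ge0}w_jz^j$, and $[(\partial_t^{\Delta t})^{-1}\widetilde f]^n=\sum_{j=0}^nw_j\widetilde f(t_{n-j})$, $t_j=j\Delta t$. The constant $C$ is independent of $\Delta t$, $f$, $\widetilde f$ and $n$. *)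

(* Defs.v *)
From Stdlib Require Import Reals.
From Coquelicot Require Import Coquelicot.
Open Scope R_scope.

(* Coefficients delta_k of the BDF generating polynomial delta(z) = sum_k delta_k z^k.
   p = 1 : BDF1, delta(z) = 1 - z.
   p = 2 : BDF2, delta(z) = 3/2 - 2 z + 1/2 z^2. *)
Definition bdf_delta (p k : nat) : R :=
  match p, k with
  | 1%nat, 0%nat => 1
  | 1%nat, 1%nat => -1
  | 2%nat, 0%nat => 3/2
  | 2%nat, 1%nat => -2
  | 2%nat, 2%nat => 1/2
  | _, _ => 0
  end.

(* Convolution quadrature weights w_j, i.e. the power-series coefficients of
   dt / delta(z) = sum_j w_j z^j.  The formal reciprocal is computed by the
   Cauchy-product recursion  sum_{k=0}^{j} delta_k w_{j-k} = dt * [j = 0]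
   (delta has degree <= 2 and delta_0 <> 0). *)
Fixpoint cq_weight (p : nat) (dt : R) (j : nat) : R :=
  match j with
  | O => dt / bdf_delta p 0
  | S j' =>
      let w1 := cq_weight p dt j' in
      let w2 := match j' with O => 0 | S j'' => cq_weight p dt j'' end in
      - (bdf_delta p 1 * w1 + bdf_delta p 2 * w2) / bdf_delta p 0
  end.

Definition cq_inv {X : NormedModule R_AbsRing} (p : nat) (dt : R)
  (g : R -> X) (n : nat) : X :=
  sum_n (fun j => scal (cq_weight p dt j) (g (INR (n - j) * dt))) n.

Definition cont_within_0T {X : NormedModule R_AbsRing} (T : R) (g : R -> X) (t : R) : Prop :=
  filterlim g (within (fun s => 0 <= s <= T) (locally t)) (locally (g t)).

Definition deriv_within_0T {X : NormedModule R_AbsRing} (T : R) (g g' : R -> X) (t : R) : Prop :=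
  filterlim (fun h => scal (/ h) (minus (g (t + h)) (g t)))
    (within (fun h => h <> 0 /\ 0 <= t + h <= T) (locally 0)) (locally (g' t)).

Definition Cr_0T {X : NormedModule R_AbsRing} (T : R) (r : nat) (f : R -> X)
  (d : nat -> R -> X) : Prop :=
  (forall t, d 0%nat t = f t) /\
  (forall k, (k < r)%nat -> forall t, 0 <= t <= T -> deriv_within_0T T (d k) (d (S k)) t) /\
  (forall t, 0 <= t <= T -> cont_within_0T T (d r) t).

(* Main.v *)
Require Import Defs.
From Stdlib Require Import Reals Lra Lia List Classical FunctionalExtensionality.
From Coquelicot Require Import Coquelicot.
Open Scope R_scope.


Section ME.
Context {V : NormedModule R_AbsRing}.

Inductive mexpr : Type :=
| MVar : nat -> mexpr
| MZero : mexpr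
| MPlus : mexpr -> mexpr -> mexpr
| MOpp : mexpr -> mexpr
| MMinus : mexpr -> mexpr -> mexpr
| MScal : R -> mexpr -> mexpr.

Fixpoint meval (env : list V) (e : mexpr) : V :=
  match e with
  | MVar i => nth i env zero
  | MZero => zero
  | MPlus a b => plus (meval env a) (meval env b)
  | MOpp a => opp (meval env a)
  | MMinus a b => minus (meval env a) (meval env b)
  | MScal r a => scal r (meval env a)
  end.

Fixpoint mcoef (e : mexpr) (i : nat) : R :=
  match e with
  | MVar j => if Nat.eqb i j then 1 else 0
  | MZero => 0
  | MPlus a b => mcoef a i + mcoef b i
  | MOpp a => - mcoef a i
  | MMinus a b => mcoef a i - mcoef b i
  | MScal r a => r * mcoef a i
  end.

Fixpoint lc (env : list V) (c : nat -> R) : V :=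
  match env with
  | nil => zero
  | x :: l => plus (scal (c O) x) (lc l (fun i => c (S i)))
  end.

Lemma sc_plus (a b : R) (x : V) : scal (a + b) x = plus (scal a x) (scal b x).
Proof. exact (scal_distr_r a b x). Qed.
Lemma sc_mult (a b : R) (x : V) : scal a (scal b x) = scal (a * b) x.
Proof. exact (scal_assoc a b x). Qed.
Lemma sc_one (x : V) : scal 1 x = x.
Proof. exact (scal_one x). Qed.
Lemma sc_zero (x : V) : scal 0 x = zero.
Proof. exact (scal_zero_l x). Qed.
Lemma sc_opp (a : R) (x : V) : scal (- a) x = opp (scal a x).
Proof. exact (scal_opp_l a x). Qed.

Lemma plus4 (a b c d : V) : plus (plus a b) (plus c d) = plus (plus a c) (plus b d).
Proof.
  rewrite <- !plus_assoc. f_equal. rewrite !plus_assoc. f_equal. apply plus_comm.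
Qed.

Lemma lc_ext env c1 c2 : (forall i, (i < length env)%nat -> c1 i = c2 i) -> lc env c1 = lc env c2.
Proof.
  revert c1 c2; induction env as [|x l IH]; intros c1 c2 H; simpl; auto.
  rewrite (H O) by (simpl; lia). f_equal. apply IH. intros i Hi. apply H. simpl; lia.
Qed.

Lemma lc_plus env c1 c2 : lc env (fun i => c1 i + c2 i) = plus (lc env c1) (lc env c2).
Proof.
  revert c1 c2; induction env as [|x l IH]; intros c1 c2; simpl.
  - now rewrite plus_zero_r.
  - rewrite IH, sc_plus. apply plus4.
Qed.

Lemma lc_scal env r c : lc env (fun i => r * c i) = scal r (lc env c).
Proof.
  revert c; induction env as [|x l IH]; intros c; simpl.
  - symmetry. exact (scal_zero_r (K:=R_AbsRing) r).
  - rewrite IH, <- sc_mult. symmetry. exact (scal_distr_l (K:=R_AbsRing) _ _ _).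
Qed.

Lemma lc_zero env : lc env (fun _ => 0) = zero.
Proof.
  induction env as [|x l IH]; simpl; auto. rewrite IH, sc_zero. apply plus_zero_r.
Qed.

Lemma lc_var env j : lc env (fun i => if Nat.eqb i j then 1 else 0) = nth j env zero.
Proof.
  revert j; induction env as [|x l IH]; intros j; simpl.
  - now destruct j.
  - destruct j as [|j]; simpl.
    + rewrite sc_one, lc_zero. apply plus_zero_r.
    + rewrite sc_zero, plus_zero_l. apply IH.
Qed.

Lemma meval_lc env e : meval env e = lc env (mcoef e).
Proof.
  induction e; simpl.
  - now rewrite lc_var.
  - now rewrite lc_zero.
  - now rewrite lc_plus, IHe1, IHe2.
  - rewrite IHe. rewrite (lc_ext env (fun i => - mcoef e i) (fun i => (- (1)) * mcoef e i)) by (intros; ring).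
    rewrite lc_scal, sc_opp, sc_one. reflexivity.
  - rewrite (lc_ext env (fun i => mcoef e1 i - mcoef e2 i) (fun i => mcoef e1 i + (- (1)) * mcoef e2 i)) by (intros; ring).
    rewrite lc_plus, lc_scal, sc_opp, sc_one, IHe1, IHe2. reflexivity.
  - now rewrite lc_scal, IHe.
Qed.

Lemma meval_eq env e1 e2 :
  (forall i, (i < length env)%nat -> mcoef e1 i = mcoef e2 i) -> meval env e1 = meval env e2.
Proof. intros H. rewrite !meval_lc. now apply lc_ext. Qed.

End ME.

Ltac mmem x l :=
  match l with
  | cons x _ => idtac
  | cons _ ?l' => mmem x l'
  end.

Ltac madd x l :=
  match True with
  | _ => let _ := match goal with _ => mmem x l end in l
  | _ => constr:(cons x l)
  end.

Ltac mlist t l :=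
  match t with
  | zero => l
  | plus ?a ?b => let l1 := mlist a l in mlist b l1
  | minus ?a ?b => let l1 := mlist a l in mlist b l1
  | opp ?a => mlist a l
  | scal ?r ?a => mlist a l
  | _ => madd t l
  end.

Ltac mindex x l :=
  match l with
  | cons x _ => constr:(O)
  | cons _ ?l' => let n := mindex x l' in constr:(S n)
  end.

Ltac mreify t l :=
  match t with
  | zero => constr:(MZero)
  | plus ?a ?b => let ea := mreify a l in let eb := mreify b l in constr:(MPlus ea eb)
  | minus ?a ?b => let ea := mreify a l in let eb := mreify b l in constr:(MMinus ea eb)
  | opp ?a => let ea := mreify a l in constr:(MOpp ea)
  | scal ?r ?a => let ea := mreify a l in constr:(MScal r ea)
  | _ => let i := mindex t l in constr:(MVar i)
  end.

Ltac mod_eq :=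
  match goal with
  | |- @eq ?V ?lhs ?rhs =>
    let l0 := mlist lhs (@nil V) in
    let l := mlist rhs l0 in
    let e1 := mreify lhs l in
    let e2 := mreify rhs l in
    change (meval l e1 = meval l e2);
    apply meval_eq;
    let i := fresh "i" in let Hi := fresh "Hi" in
    intros i Hi; simpl in Hi;
    repeat (destruct i as [|i]; [simpl; try ring; try (field; auto) | try (exfalso; lia)])
  end.



Ltac nrw t := apply Rle_trans with (norm t); [right; f_equal; mod_eq|].

Section MVT.
Context {X : CompleteNormedModule R_AbsRing}.

Lemma norm_scal_R (l : R) (x : X) : norm (scal l x) <= Rabs l * norm x.
Proof. exact (norm_scal l x). Qed.

Lemma ntri (x y : X) : norm (plus x y) <= norm x + norm y.
Proof. exact (norm_triangle x y). Qed.
Lemma ntri_inv (x y : X) : Rabs (norm x - norm y) <= norm (minus x y).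
Proof. exact (norm_triangle_inv x y). Qed.
Lemma nge0 (x : X) : 0 <= norm x.
Proof. exact (norm_ge_0 x). Qed.
Lemma nopp (x : X) : norm (opp x) = norm x.
Proof. exact (norm_opp x). Qed.

Lemma normX0 : norm (@zero X) = 0.
Proof. exact norm_zero. Qed.

Lemma deriv_eps T (g g' : R -> X) t eps : 0 < eps -> deriv_within_0T T g g' t ->
  exists del, 0 < del /\ forall h, Rabs h < del -> 0 <= t + h <= T ->
    norm (minus (minus (g (t+h)) (g t)) (scal h (g' t))) <= eps * Rabs h.
Proof.
  intros He Hd. unfold deriv_within_0T in Hd.
  apply filterlim_locally_ball_norm with (eps := mkposreal eps He) in Hd.
  destruct Hd as [[del Hdel] Hb]. exists del; split; [exact Hdel|].
  intros h Hh Ht.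
  destruct (Req_dec h 0) as [->|Hn0].
  - replace (minus (minus (g (t+0)) (g t)) (scal 0 (g' t))) with (@zero X).
    rewrite normX0, Rabs_R0; lra. rewrite Rplus_0_r. mod_eq.
  - assert (Hb' := Hb h). unfold ball_norm in Hb'. simpl in Hb'.
    assert (Hbb : ball 0 del h). { unfold ball; simpl; unfold AbsRing_ball; simpl.
      unfold abs, minus, plus, opp; simpl. now rewrite Ropp_0, Rplus_0_r. }
    specialize (Hb' Hbb (conj Hn0 Ht)).
    replace (minus (minus (g (t + h)) (g t)) (scal h (g' t)))
      with (scal h (minus (scal (/ h) (minus (g (t + h)) (g t))) (g' t))) by mod_eq.
    eapply Rle_trans; [apply norm_scal_R|]. rewrite (Rmult_comm eps).
    apply Rmult_le_compat_l; [apply Rabs_pos| apply Rlt_le; exact Hb'].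
Qed.
End MVT.

Section MVT2.
Context {X : CompleteNormedModule R_AbsRing}.

Definition Phi (g : R -> X) (a : R) (v : X) (x : R) : R := norm (minus (minus (g x) (g a)) (scal (x - a) v)).

Lemma Phi_local T (g g' : R -> X) a (v : X) K s eps : 0 < eps ->
  deriv_within_0T T g g' s -> norm (minus (g' s) v) <= K ->
  exists del, 0 < del /\ forall y, 0 <= y <= T -> Rabs (y - s) < del ->
    Rabs (Phi g a v y - Phi g a v s) <= (K + eps) * Rabs (y - s).
Proof.
  intros He Hd HK. destruct (deriv_eps T g g' s eps He Hd) as [del [Hdel H]].
  exists del; split; auto. intros y Hy Hys.
  specialize (H (y - s) Hys). replace (s + (y - s)) with y in H by ring.
  specialize (H Hy).
  unfold Phi. eapply Rle_trans; [apply ntri_inv|].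
  apply Rle_trans with (norm (plus (minus (minus (g y) (g s)) (scal (y - s) (g' s))) (scal (y - s) (minus (g' s) v)))).
  { right. f_equal. mod_eq. }
  eapply Rle_trans; [apply ntri|].
  eapply Rle_trans; [apply Rplus_le_compat; [exact H| apply norm_scal_R]|].
  assert (0 <= Rabs (y - s)) by apply Rabs_pos. nra.
Qed.

Lemma Phi_a (g : R -> X) a (v : X) : Phi g a v a = 0.
Proof.
  unfold Phi. replace (minus (minus (g a) (g a)) (scal (a - a) v)) with (@zero X) by mod_eq.
  apply normX0.
Qed.

Lemma mvt_eps T (g g' : R -> X) a b (v : X) K eps : 0 < eps -> 0 <= a -> a <= b -> b <= T ->
  (forall u, a <= u <= b -> deriv_within_0T T g g' u) ->
  (forall u, a <= u <= b -> norm (minus (g' u) v) <= K) ->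
  Phi g a v b <= (K + eps) * (b - a) + eps.
Proof.
  intros He Ha Hab HbT Hd HK.
  assert (HK0 : 0 <= K) by (eapply Rle_trans; [apply (nge0 (minus (g' a) v))| apply (HK a); lra]).
  set (P := fun y => Phi g a v y <= (K + eps) * (y - a) + eps).
  set (E := fun x => a <= x <= b /\ forall y, a <= y <= x -> P y).
  assert (HPa : P a) by (unfold P; rewrite Phi_a; lra).
  assert (HE : bound E) by (exists b; intros x [Hx _]; lra).
  assert (HEa : exists x, E x).
  { exists a. split; [lra|]. intros y Hy. replace y with a by lra. exact HPa. }
  destruct (completeness E HE HEa) as [s [Hub Hlub]].
  assert (Has : a <= s) by (apply Hub; destruct HEa; split; [lra|]; intros y Hy; replace y with a by lra; exact HPa).
  assert (Hsb : s <= b) by (apply Hlub; intros x [Hx _]; lra).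
  assert (C1 : forall y, a <= y < s -> P y).
  { intros y Hy. destruct (Rle_lt_dec s y) as [H|H]; [lra|].
    apply NNPP. intros HnP.
    assert (Hyub : is_upper_bound E y).
    { intros x [Hx Hx2]. destruct (Rle_lt_dec x y) as [H1|H1]; auto.
      exfalso. apply HnP. apply Hx2. lra. }
    specialize (Hlub y Hyub). lra. }
  destruct (Phi_local T g g' a v K s eps He (Hd s (conj Has Hsb)) (HK s (conj Has Hsb)))
    as [del [Hdel Hloc]].
  assert (C2 : P s).
  { destruct (Req_dec s a) as [->|Hsa]; [exact HPa|].
    set (y := Rmax a (s - del / 2)).
    assert (Hy1 : a <= y) by apply Rmax_l.
    assert (Hy2 : y < s) by (unfold y; apply Rmax_lub_lt; lra).
    assert (Hy3 : s - del/2 <= y) by apply Rmax_r.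
    assert (HPy := C1 y (conj Hy1 Hy2)).
    assert (Hl := Hloc y ltac:(lra) ltac:(rewrite Rabs_left by lra; lra)).
    rewrite (Rabs_left (y - s)) in Hl by lra.
    apply Rabs_le_between' in Hl. unfold P in *. nra. }
  assert (Hsb' : s = b).
  { destruct (Req_dec s b) as [H|H]; auto. exfalso.
    set (y0 := Rmin b (s + del / 2)).
    assert (Hy1 : y0 <= b) by apply Rmin_l.
    assert (Hy2 : s < y0) by (unfold y0; apply Rmin_glb_lt; lra).
    assert (Hy3 : y0 <= s + del/2) by apply Rmin_r.
    assert (Ey0 : E y0).
    { split; [lra|]. intros y Hy.
      destruct (Rlt_le_dec y s) as [H1|H1]; [apply C1; lra|].
      destruct (Req_dec y s) as [->|H2]; [exact C2|].
      assert (Hl := Hloc y ltac:(lra) ltac:(rewrite Rabs_right by lra; lra)).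
      rewrite (Rabs_right (y - s)) in Hl by lra.
      apply Rabs_le_between' in Hl. unfold P in *. nra. }
    specialize (Hub y0 Ey0). lra. }
  subst s. exact C2.
Qed.

Lemma mvt T (g g' : R -> X) a b (v : X) K : 0 <= a -> a <= b -> b <= T ->
  (forall u, a <= u <= b -> deriv_within_0T T g g' u) ->
  (forall u, a <= u <= b -> norm (minus (g' u) v) <= K) ->
  norm (minus (minus (g b) (g a)) (scal (b - a) v)) <= K * (b - a).
Proof.
  intros Ha Hab HbT Hd HK. apply le_epsilon. intros eps He.
  assert (H := mvt_eps T g g' a b v K (eps / (b - a + 1)) ltac:(apply Rdiv_lt_0_compat; lra)
    Ha Hab HbT Hd HK). unfold Phi in H.
  eapply Rle_trans; [exact H|].
  assert (eps / (b - a + 1) * (b - a + 1) = eps) by (field; lra).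
  nra.
Qed.
End MVT2.

Section LIP.
Context {X : CompleteNormedModule R_AbsRing}.

Lemma lipd T (g g' : R -> X) K c : 0 <= c -> c <= T ->
  (forall u, 0 <= u <= c -> deriv_within_0T T g g' u) ->
  (forall u, 0 <= u <= c -> norm (g' u) <= K) ->
  forall u w, 0 <= u <= c -> 0 <= w <= c -> norm (minus (g u) (g w)) <= K * Rabs (u - w).
Proof.
  intros Hc HcT Hd HK u w Hu Hw.
  assert (HK' : forall x, 0 <= x <= c -> norm (minus (g' x) zero) <= K).
  { intros x Hx. nrw (g' x). now apply HK. }
  destruct (Rle_lt_dec w u) as [H|H].
  - assert (Hm := mvt T g g' w u zero K ltac:(lra) H ltac:(lra)
      ltac:(intros; apply Hd; lra) ltac:(intros; apply HK'; lra)).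
    rewrite Rabs_right by lra. eapply Rle_trans; [|exact Hm]. right. f_equal. mod_eq.
  - assert (Hm := mvt T g g' u w zero K ltac:(lra) ltac:(lra) ltac:(lra)
      ltac:(intros; apply Hd; lra) ltac:(intros; apply HK'; lra)).
    rewrite Rabs_left by lra. replace (K * - (u - w)) with (K * (w - u)) by ring.
    eapply Rle_trans; [|exact Hm]. right. rewrite <- nopp. f_equal. mod_eq.
Qed.

Lemma taylor T (g g' g'' : R -> X) M c : 0 <= c -> c <= T ->
  (forall u, 0 <= u <= c -> deriv_within_0T T g g' u) ->
  (forall u w, 0 <= u <= c -> 0 <= w <= c -> norm (minus (g' u) (g' w)) <= M * Rabs (u - w)) ->
  forall c0 s, 0 <= c0 <= c -> 0 <= s <= c ->
    norm (minus (minus (g s) (g c0)) (scal (s - c0) (g' c0))) <= M * (s - c0) ^ 2.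
Proof.
  intros Hc HcT Hd HL c0 s Hc0 Hs.
  assert (HM : 0 <= M \/ c0 = s).
  { destruct (Req_dec c0 s) as [E|E]; [now right|left].
    assert (H := HL c0 s Hc0 Hs). assert (0 <= norm (minus (g' c0) (g' s))) by apply nge0.
    assert (0 < Rabs (c0 - s)) by (apply Rabs_pos_lt; lra). nra. }
  destruct HM as [HM| ->].
  2: { nrw (@zero X). rewrite normX0. nra. }
  destruct (Rle_lt_dec c0 s) as [H|H].
  - assert (Hm := mvt T g g' c0 s (g' c0) (M * (s - c0)) ltac:(lra) H ltac:(lra)
      ltac:(intros; apply Hd; lra)
      ltac:(intros u Hu; eapply Rle_trans; [apply HL; lra|];
            apply Rmult_le_compat_l; [lra|]; unfold Rabs; destruct Rcase_abs; lra)).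
    eapply Rle_trans; [exact Hm|]. right; ring.
  - assert (Hm := mvt T g g' s c0 (g' c0) (M * (c0 - s)) ltac:(lra) ltac:(lra) ltac:(lra)
      ltac:(intros; apply Hd; lra)
      ltac:(intros u Hu; eapply Rle_trans; [apply HL; lra|];
            apply Rmult_le_compat_l; [lra|]; unfold Rabs; destruct Rcase_abs; lra)).
    rewrite <- nopp. nrw (minus (minus (g c0) (g s)) (scal (c0 - s) (g' c0))).
    eapply Rle_trans; [exact Hm|]. right; ring.
Qed.
End LIP.


Section CQ.
Context {X : CompleteNormedModule R_AbsRing}.

Lemma w1 h j : cq_weight 1 h j = h.
Proof.
  induction j as [|j IH]; simpl; [unfold bdf_delta; field|].
  unfold bdf_delta. rewrite IH. destruct j; field.
Qed.

Lemma w2_0 h : cq_weight 2 h 0 = 2 * h / 3.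
Proof. simpl. unfold bdf_delta. field. Qed.

Lemma w2 h j : cq_weight 2 h (S j) = 2 * h / 3 + / 3 * cq_weight 2 h j.
Proof.
  induction j as [|j IH].
  - simpl. unfold bdf_delta. field.
  - change (cq_weight 2 h (S (S j))) with
      (- (bdf_delta 2 1 * cq_weight 2 h (S j) + bdf_delta 2 2 * cq_weight 2 h j) / bdf_delta 2 0).
    rewrite IH. unfold bdf_delta. field.
Qed.

Lemma cq_0 p h (g : R -> X) : cq_inv p h g 0 = scal (cq_weight p h 0) (g 0).
Proof. unfold cq_inv. rewrite sum_O. simpl. now rewrite Rmult_0_l. Qed.

Lemma cq_S p h (g : R -> X) n : cq_inv p h g (S n) =
  plus (scal (cq_weight p h 0) (g (INR (S n) * h)))
    (sum_n (fun j => scal (cq_weight p h (S j)) (g (INR (n - j) * h))) n).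
Proof.
  unfold cq_inv, sum_n. rewrite sum_Sn_m by lia. f_equal.
  rewrite <- sum_n_m_S. reflexivity.
Qed.

Lemma sum_lin (u v : nat -> R) (y : nat -> X) a b n :
  sum_n (fun j => scal (a * u j + b * v j) (y j)) n =
  plus (scal a (sum_n (fun j => scal (u j) (y j)) n)) (scal b (sum_n (fun j => scal (v j) (y j)) n)).
Proof.
  induction n as [|n IH].
  - rewrite !sum_O. mod_eq.
  - rewrite !sum_Sn, IH. mod_eq.
Qed.

Lemma cq1_S h (g : R -> X) n : cq_inv 1 h g (S n) =
  plus (scal h (g (INR (S n) * h))) (cq_inv 1 h g n).
Proof.
  rewrite cq_S, w1. f_equal. unfold cq_inv. apply sum_n_ext. intros j. now rewrite !w1.
Qed.

Lemma cq2_S h (g : R -> X) n : cq_inv 2 h g (S n) =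
  plus (scal (2 * h / 3) (g (INR (S n) * h)))
    (plus (scal (2/3) (cq_inv 1 h g n)) (scal (/3) (cq_inv 2 h g n))).
Proof.
  rewrite cq_S, w2_0. f_equal.
  rewrite (sum_n_ext _ (fun j => scal (2/3 * cq_weight 1 h j + /3 * cq_weight 2 h j) (g (INR (n - j) * h)))).
  - apply (sum_lin (cq_weight 1 h) (cq_weight 2 h) (fun j => g (INR (n - j) * h))).
  - intros j. rewrite w2, w1. f_equal. field.
Qed.
End CQ.



Section INT.
Context {X : CompleteNormedModule R_AbsRing}.

Definition Lip (G : R -> X) L := forall x y, norm (minus (G x) (G y)) <= L * Rabs (x - y).

Lemma lip_cont (G : R -> X) L : 0 <= L -> Lip G L -> forall x, continuous G x.
Proof.
  intros HL HG x. unfold continuous. apply (proj2 (filterlim_locally_ball_norm G (G x))). intros [eps He].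
  exists (mkposreal (eps / (L + 1)) ltac:(apply Rdiv_lt_0_compat; lra)).
  intros y Hy. unfold ball in Hy; simpl in Hy; unfold AbsRing_ball, abs, minus, plus, opp in Hy; simpl in Hy.
  unfold ball_norm; simpl.
  eapply Rle_lt_trans; [apply HG|].
  assert (Rabs (y - x) * (L + 1) < eps).
  { apply (Rmult_lt_compat_r (L+1)) in Hy; [|lra].
    replace (eps / (L + 1) * (L + 1)) with eps in Hy by (field; lra). exact Hy. }
  assert (0 <= Rabs (y - x)) by apply Rabs_pos. nra.
Qed.

Lemma lip_ex (G : R -> X) L a b : 0 <= L -> Lip G L -> ex_RInt G a b.
Proof. intros HL HG. apply ex_RInt_continuous. intros z _. eapply lip_cont; eauto. Qed.

Lemma RInt_bound (G : R -> X) a b M : a <= b -> ex_RInt G a b ->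
  (forall x, a <= x <= b -> norm (G x) <= M) -> norm (RInt G a b) <= (b - a) * M.
Proof.
  intros Hab Hex HM. apply (norm_RInt_le_const G a b); auto. now apply RInt_correct.
Qed.

Definition clamp c x := Rmax 0 (Rmin c x).

Lemma clamp_id c x : 0 <= x <= c -> clamp c x = x.
Proof. intros H. unfold clamp, Rmax, Rmin. repeat destruct Rle_dec; lra. Qed.

Lemma clamp_in c x : 0 <= c -> 0 <= clamp c x <= c.
Proof. intros H. unfold clamp, Rmax, Rmin. repeat destruct Rle_dec; lra. Qed.

Lemma clamp_lip c x y : 0 <= c -> Rabs (clamp c x - clamp c y) <= Rabs (x - y).
Proof.
  intros H. unfold clamp, Rmax, Rmin. repeat destruct Rle_dec;
  unfold Rabs; repeat destruct Rcase_abs; lra.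
Qed.

Lemma lip_clamp (f : R -> X) c L : 0 <= c -> 0 <= L ->
  (forall u w, 0 <= u <= c -> 0 <= w <= c -> norm (minus (f u) (f w)) <= L * Rabs (u - w)) ->
  Lip (fun x => f (clamp c x)) L.
Proof.
  intros Hc HL H x y. eapply Rle_trans; [apply H; apply clamp_in; auto|].
  apply Rmult_le_compat_l; auto. now apply clamp_lip.
Qed.

Lemma le_right (F : R -> X) L a b : 0 <= L -> Lip F L -> a <= b ->
  norm (minus (RInt F a b) (scal (b - a) (F b))) <= L * (b - a) * (b - a).
Proof.
  intros HL HF Hab.
  rewrite <- RInt_const, <- RInt_minus; [| eapply lip_ex; eauto | apply ex_RInt_const].
  replace (L * (b - a) * (b - a)) with ((b - a) * (L * (b - a))) by ring.
  apply RInt_bound; auto.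
  - apply ex_RInt_minus; [eapply lip_ex; eauto | apply ex_RInt_const].
  - intros x Hx. eapply Rle_trans; [apply HF|]. apply Rmult_le_compat_l; auto.
    unfold Rabs; destruct Rcase_abs; lra.
Qed.

Lemma le_trap (F : R -> X) L a b : 0 <= L -> Lip F L -> a <= b ->
  norm (minus (RInt F a b) (scal ((b - a) / 2) (plus (F a) (F b)))) <= L * (b - a) * (b - a).
Proof.
  intros HL HF Hab.
  replace (scal ((b - a) / 2) (plus (F a) (F b))) with (scal (b - a) (scal (1/2) (plus (F a) (F b)))) by mod_eq.
  rewrite <- RInt_const, <- RInt_minus; [| eapply lip_ex; eauto | apply ex_RInt_const].
  replace (L * (b - a) * (b - a)) with ((b - a) * (L * (b - a))) by ring.
  apply RInt_bound; auto.
  - apply ex_RInt_minus; [eapply lip_ex; eauto | apply ex_RInt_const].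
  - intros x Hx.
    nrw (plus (scal (1/2) (minus (F x) (F a))) (scal (1/2) (minus (F x) (F b)))).
    eapply Rle_trans; [apply ntri|].
    eapply Rle_trans; [apply Rplus_le_compat; apply norm_scal_R|].
    assert (H1 := HF x a). assert (H2 := HF x b).
    assert (Rabs (x - a) <= b - a) by (unfold Rabs; destruct Rcase_abs; lra).
    assert (Rabs (x - b) <= b - a) by (unfold Rabs; destruct Rcase_abs; lra).
    rewrite Rabs_right by lra. nra.
Qed.
End INT.

Section INT2.
Context {X : CompleteNormedModule R_AbsRing}.

Lemma RInt_refl (F : R -> X) L a b : 0 <= L -> Lip F L ->
  RInt (fun y => F ((-1) * y + (a + b))) a b = RInt F a b.
Proof.
  intros HL HF.
  assert (Hex : ex_RInt (fun y => F ((-1) * y + (a + b))) a b).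
  { apply (lip_ex _ L); auto. intros x y. eapply Rle_trans; [apply HF|].
    right. f_equal. replace (-1 * x + (a + b) - (-1 * y + (a + b))) with (-(x - y)) by ring.
    apply Rabs_Ropp. }
  assert (H := RInt_comp_lin F (-1) (a + b) a b (lip_ex F L _ _ HL HF)).
  rewrite RInt_scal in H by exact Hex.
  replace (-1 * a + (a + b)) with b in H by ring.
  replace (-1 * b + (a + b)) with a in H by ring.
  rewrite <- (opp_RInt_swap F a b) in H by exact (lip_ex F L a b HL HF).
  set (Z := RInt (fun y => F ((-1) * y + (a + b))) a b) in *.
  set (W := RInt F a b) in *.
  transitivity (scal (-1) (scal (-1) Z)); [mod_eq|]. rewrite H. mod_eq.
Qed.

Lemma le_trap2 (F f f' : R -> X) L M a b : 0 <= L -> Lip F L -> a <= b -> 0 <= M ->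
  (forall s, a <= s <= b -> F s = f s) ->
  (forall c s, a <= c <= b -> a <= s <= b ->
     norm (minus (minus (f s) (f c)) (scal (s - c) (f' c))) <= M * (s - c) ^ 2) ->
  norm (minus (f' a) (f' b)) <= M * (b - a) ->
  norm (minus (RInt F a b) (scal ((b - a) / 2) (plus (F a) (F b)))) <= 3 / 2 * M * (b - a) ^ 3.
Proof.
  intros HL HF Hab HM HFf HT Hd.
  assert (Hex := lip_ex F L a b HL HF).
  assert (HexG : ex_RInt (fun y => F ((-1) * y + (a + b))) a b).
  { apply (lip_ex _ L); auto. intros x y. eapply Rle_trans; [apply HF|].
    right. f_equal. replace (-1 * x + (a + b) - (-1 * y + (a + b))) with (-(x - y)) by ring.
    apply Rabs_Ropp. }
  set (G := fun y => F ((-1) * y + (a + b))) in *.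
  set (Phi := fun s => minus (plus (F s) (G s)) (plus (F a) (F b))).
  assert (HI : RInt Phi a b = minus (plus (RInt F a b) (RInt G a b)) (scal (b - a) (plus (F a) (F b)))).
  { unfold Phi.
    etransitivity; [apply (RInt_minus (fun s => plus (F s) (G s)) (fun _ => plus (F a) (F b)) a b
      (ex_RInt_plus F G a b Hex HexG) (ex_RInt_const a b _))|].
    apply f_equal2; [apply (RInt_plus F G a b Hex HexG) | apply RInt_const]. }
  assert (HG : RInt G a b = RInt F a b) by exact (RInt_refl F L a b HL HF).
  rewrite HG in HI.
  nrw (scal (1/2) (minus (plus (RInt F a b) (RInt F a b)) (scal (b - a) (plus (F a) (F b))))).
  rewrite <- HI.
  eapply Rle_trans; [apply norm_scal_R|].
  assert (HB : norm (RInt Phi a b) <= (b - a) * (3 * M * (b - a) ^ 2)).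
  { apply RInt_bound; [lra| |].
    - exact (ex_RInt_minus _ _ a b (ex_RInt_plus F G a b Hex HexG) (ex_RInt_const a b (plus (F a) (F b)))).
    - intros s Hs. unfold Phi, G.
      assert (Hs' : a <= -1 * s + (a + b) <= b) by lra.
      rewrite (HFf s Hs), (HFf _ Hs'), (HFf a ltac:(lra)), (HFf b ltac:(lra)).
      nrw (plus (plus (minus (minus (f s) (f a)) (scal (s - a) (f' a)))
                      (minus (minus (f (-1 * s + (a + b))) (f b)) (scal (-1 * s + (a + b) - b) (f' b))))
                (scal (s - a) (minus (f' a) (f' b)))).
      eapply Rle_trans; [apply ntri|].
      eapply Rle_trans; [apply Rplus_le_compat; [apply ntri| apply norm_scal_R]|].
      assert (H1 := HT a s ltac:(lra) Hs).
      assert (H2 := HT b (-1 * s + (a + b)) ltac:(lra) Hs').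
      assert (E2 : (-1 * s + (a + b) - b) ^ 2 = (s - a) ^ 2) by ring.
      rewrite E2 in H2.
      rewrite Rabs_right by lra.
      assert ((s - a) ^ 2 <= (b - a) ^ 2) by (apply pow_incr; lra).
      assert (0 <= norm (minus (f' a) (f' b))) by apply nge0.
      assert ((s - a) * norm (minus (f' a) (f' b)) <= (b - a) * (M * (b - a))) by
        (apply Rmult_le_compat; lra).
      assert (0 <= M * (s - a) ^ 2) by (apply Rmult_le_pos; [lra| apply pow2_ge_0]).
      assert (M * (s - a) ^ 2 <= M * (b - a) ^ 2) by (apply Rmult_le_compat_l; lra).
      apply Rle_trans with (M * (s - a) ^ 2 + M * (s - a) ^ 2 + (b - a) * (M * (b - a))).
      { apply Rplus_le_compat; [apply Rplus_le_compat; [exact H1| exact H2]| assumption]. }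
      nra. }
  rewrite Rabs_right by lra.
  replace (3 / 2 * M * (b - a) ^ 3) with (1/2 * ((b - a) * (3 * M * (b - a) ^ 2))) by field.
  apply Rmult_le_compat_l; [lra| exact HB].
Qed.
End INT2.



Lemma rec_bound1 (w : nat -> R) c n : w 0%nat <= 0 ->
  (forall m, (m < n)%nat -> w (S m) <= /3 * w m + c) -> 0 <= c ->
  (forall m, (m <= n)%nat -> w m <= INR m * c).
Proof.
  intros H0 HS Hc m. induction m as [|m IH]; intros Hm; [simpl; lra|].
  rewrite S_INR. specialize (IH ltac:(lia)). specialize (HS m ltac:(lia)).
  assert (0 <= INR m) by apply pos_INR.
  destruct (Rle_lt_dec 0 (w m)); nra.
Qed.

Lemma rec_bound2 (w : nat -> R) c n : w 0%nat <= 0 ->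
  (forall m, (m < n)%nat -> w (S m) <= /3 * w m + c) -> 0 <= c ->
  (forall m, (m <= n)%nat -> w m <= 3/2 * c).
Proof.
  intros H0 HS Hc m. induction m as [|m IH]; intros Hm; [lra|].
  specialize (IH ltac:(lia)). specialize (HS m ltac:(lia)). lra.
Qed.

Section MAIN.
Context {X : CompleteNormedModule R_AbsRing}.

Lemma nsc (l : R) (x : X) : 0 <= l -> norm (scal l x) <= l * norm x.
Proof. intros H. eapply Rle_trans; [apply norm_scal_R|]. rewrite Rabs_right by lra. lra. Qed.

Lemma diff_bound p dt (f ft : R -> X) n M2 : (p = 1%nat \/ p = 2%nat) -> 0 < dt ->
  f 0 = zero -> ft 0 = zero ->
  (forall tau, 0 <= tau <= INR n * dt -> norm (minus (f tau) (ft tau)) <= M2) ->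
  norm (minus (cq_inv p dt f n) (cq_inv p dt ft n)) <= INR n * dt * M2.
Proof.
  intros Hp Hdt Hf0 Hft0 HM.
  assert (HM2 : 0 <= M2).
  { eapply Rle_trans; [apply (nge0 (minus (f 0) (ft 0)))|]. apply HM.
    assert (0 <= INR n) by apply pos_INR. nra. }
  assert (Hgrid : forall m, (m <= n)%nat -> 0 <= INR m * dt <= INR n * dt).
  { intros m Hm. assert (0 <= INR m) by apply pos_INR. assert (INR m <= INR n) by (apply le_INR; lia).
    split; nra. }
  assert (HB : forall m, (m <= n)%nat ->
    norm (minus (cq_inv 1 dt f m) (cq_inv 1 dt ft m)) <= INR m * dt * M2).
  { induction m as [|m IH]; intros Hm.
    - rewrite !cq_0, Hf0, Hft0. nrw (@zero X). rewrite normX0. simpl; lra.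
    - rewrite !cq1_S.
      nrw (plus (scal dt (minus (f (INR (S m) * dt)) (ft (INR (S m) * dt))))
             (minus (cq_inv 1 dt f m) (cq_inv 1 dt ft m))).
      eapply Rle_trans; [apply ntri|].
      eapply Rle_trans; [apply Rplus_le_compat; [apply nsc; lra| apply IH; lia]|].
      assert (Hn : norm (minus (f (INR (S m) * dt)) (ft (INR (S m) * dt))) <= M2) by (apply HM, Hgrid; lia).
      apply Rle_trans with (dt * M2 + INR m * dt * M2).
      { apply Rplus_le_compat_r. apply Rmult_le_compat_l; [lra| exact Hn]. }
      rewrite S_INR. nra. }
  destruct Hp as [-> | ->]; [apply HB; lia|].
  assert (HC : forall m, (m <= n)%nat ->
    norm (minus (cq_inv 2 dt f m) (cq_inv 2 dt ft m)) <= INR m * dt * M2).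
  { induction m as [|m IH]; intros Hm.
    - rewrite !cq_0, Hf0, Hft0. nrw (@zero X). rewrite normX0. simpl; lra.
    - rewrite !cq2_S.
      nrw (plus (scal (2 * dt / 3) (minus (f (INR (S m) * dt)) (ft (INR (S m) * dt))))
             (plus (scal (2/3) (minus (cq_inv 1 dt f m) (cq_inv 1 dt ft m)))
                   (scal (/3) (minus (cq_inv 2 dt f m) (cq_inv 2 dt ft m))))).
      eapply Rle_trans; [apply ntri|].
      eapply Rle_trans; [apply Rplus_le_compat; [apply nsc; lra| apply ntri]|].
      eapply Rle_trans; [apply Rplus_le_compat_l; apply Rplus_le_compat; apply nsc; lra|].
      assert (Hn : norm (minus (f (INR (S m) * dt)) (ft (INR (S m) * dt))) <= M2) by (apply HM, Hgrid; lia).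
      assert (H1 := HB m ltac:(lia)). assert (H2 := IH ltac:(lia)).
      assert (0 <= INR m) by apply pos_INR.
      apply Rle_trans with (2 * dt / 3 * M2 + (2/3 * (INR m * dt * M2) + /3 * (INR m * dt * M2))).
      { apply Rplus_le_compat; [apply Rmult_le_compat_l; [lra| exact Hn]|].
        apply Rplus_le_compat; apply Rmult_le_compat_l; try lra; assumption. }
      rewrite S_INR. nra. }
  apply HC; lia.
Qed.
End MAIN.



Section ERR.
Context {X : CompleteNormedModule R_AbsRing}.

Lemma Ichas (F : R -> X) L dt m : 0 <= L -> Lip F L ->
  RInt F 0 (INR (S m) * dt) = plus (RInt F 0 (INR m * dt)) (RInt F (INR m * dt) (INR (S m) * dt)).
Proof.
  intros HL HF. symmetry. apply RInt_Chasles; eapply lip_ex; eauto.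
Qed.

Lemma I0 (F : R -> X) dt : RInt F 0 (INR 0 * dt) = zero.
Proof. simpl. rewrite Rmult_0_l. apply RInt_point. Qed.

Lemma err1 (F g : R -> X) L dt n : 0 < dt -> 0 <= L -> Lip F L -> g 0 = zero ->
  (forall m, (m <= n)%nat -> F (INR m * dt) = g (INR m * dt)) ->
  norm (minus (RInt F 0 (INR n * dt)) (cq_inv 1 dt g n)) <= INR n * (L * dt * dt).
Proof.
  intros Hdt HL HF Hg0 Hgrid.
  induction n as [|m IH].
  - rewrite I0, cq_0, Hg0. nrw (@zero X). rewrite normX0. simpl; lra.
  - rewrite (Ichas F L dt m HL HF), cq1_S.
    nrw (plus (minus (RInt F 0 (INR m * dt)) (cq_inv 1 dt g m))
              (minus (RInt F (INR m * dt) (INR (S m) * dt)) (scal dt (g (INR (S m) * dt))))).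
    eapply Rle_trans; [apply ntri|].
    assert (H1 := IH ltac:(intros; apply Hgrid; lia)).
    assert (Hab : INR m * dt <= INR (S m) * dt) by (rewrite S_INR; lra).
    assert (H2 := le_right F L (INR m * dt) (INR (S m) * dt) HL HF Hab).
    replace (INR (S m) * dt - INR m * dt) with dt in H2 by (rewrite S_INR; ring).
    rewrite (Hgrid (S m) ltac:(lia)) in H2.
    apply Rle_trans with (INR m * (L * dt * dt) + L * dt * dt).
    { apply Rplus_le_compat; assumption. }
    rewrite S_INR. lra.
Qed.

Lemma err2 (F g : R -> X) L dt n cZ cW : 0 < dt -> 0 <= L -> Lip F L -> g 0 = zero ->
  0 <= cZ -> 0 <= cW ->
  (forall m, (m <= n)%nat -> F (INR m * dt) = g (INR m * dt)) ->
  (forall m, (m < n)%nat -> norm (minus (RInt F (INR m * dt) (INR (S m) * dt))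
        (scal (dt / 2) (plus (g (INR m * dt)) (g (INR (S m) * dt))))) <= cZ) ->
  (forall m, (m < n)%nat -> norm (scal (dt / 6) (minus (g (INR m * dt)) (g (INR (S m) * dt)))) <= cW) ->
  norm (minus (RInt F 0 (INR n * dt)) (cq_inv 2 dt g n)) <= INR n * cZ + INR n * cW /\
  norm (minus (RInt F 0 (INR n * dt)) (cq_inv 2 dt g n)) <= INR n * cZ + 3/2 * cW.
Proof.
  intros Hdt HL HF Hg0 HcZ HcW Hgrid HZ HW.
  set (Z := fun m : nat => (plus (minus (RInt F 0 (INR m * dt)) (cq_inv 1 dt g m)) (scal (dt / 2) (g (INR m * dt))) : X)).
  set (W := fun m : nat => (minus (minus (cq_inv 1 dt g m) (cq_inv 2 dt g m)) (scal (dt / 2) (g (INR m * dt))) : X)).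
  assert (HE : forall m, minus (RInt F 0 (INR m * dt)) (cq_inv 2 dt g m) = plus (Z m) (W m)).
  { intros m. unfold Z, W. mod_eq. }
  assert (HZb : forall m, (m <= n)%nat -> norm (Z m) <= INR m * cZ).
  { induction m as [|m IH]; intros Hm.
    - unfold Z. rewrite I0, cq_0. simpl (INR 0). rewrite Rmult_0_l, Hg0. nrw (@zero X).
      rewrite normX0. lra.
    - unfold Z. rewrite (Ichas F L dt m HL HF), cq1_S.
      nrw (plus (plus (minus (RInt F 0 (INR m * dt)) (cq_inv 1 dt g m)) (scal (dt / 2) (g (INR m * dt)))) (minus (RInt F (INR m * dt) (INR (S m) * dt))
        (scal (dt / 2) (plus (g (INR m * dt)) (g (INR (S m) * dt)))))).
      eapply Rle_trans; [apply ntri|].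
      apply Rle_trans with (INR m * cZ + cZ).
      { apply Rplus_le_compat; [apply IH; lia| apply HZ; lia]. }
      rewrite S_INR. lra. }
  assert (HWr : forall m, (m < n)%nat -> norm (W (S m)) <= /3 * norm (W m) + cW).
  { intros m Hm. unfold W. rewrite cq1_S, cq2_S.
    nrw (plus (scal (/3) (minus (minus (cq_inv 1 dt g m) (cq_inv 2 dt g m)) (scal (dt / 2) (g (INR m * dt)))))
       (scal (dt / 6) (minus (g (INR m * dt)) (g (INR (S m) * dt))))).
    eapply Rle_trans; [apply ntri|].
    apply Rplus_le_compat; [apply nsc; lra| apply HW; lia]. }
  assert (HW0 : norm (W 0%nat) <= 0).
  { unfold W. rewrite !cq_0. simpl (INR 0). rewrite Rmult_0_l, Hg0. nrw (@zero X). rewrite normX0. lra. }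
  assert (B1 := rec_bound1 (fun m => norm (W m)) cW n HW0 HWr HcW n (le_n n)).
  assert (B2 := rec_bound2 (fun m => norm (W m)) cW n HW0 HWr HcW n (le_n n)).
  simpl in B1, B2.
  rewrite HE. split; (eapply Rle_trans; [apply ntri|]); apply Rplus_le_compat; auto.
Qed.
End ERR.



Section FIN.
Context {X : CompleteNormedModule R_AbsRing}.

Lemma assemble p (g ft F : R -> X) n dt E M2 :
  norm (minus (RInt F 0 (INR n * dt)) (cq_inv p dt g n)) <= E ->
  RInt g 0 (INR n * dt) = RInt F 0 (INR n * dt) ->
  norm (minus (cq_inv p dt g n) (cq_inv p dt ft n)) <= INR n * dt * M2 ->
  norm (minus (RInt g 0 (INR n * dt)) (cq_inv p dt ft n)) <= E + INR n * dt * M2.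
Proof.
  intros H1 H2 H3. rewrite H2.
  nrw (plus (minus (RInt F 0 (INR n * dt)) (cq_inv p dt g n)) (minus (cq_inv p dt g n) (cq_inv p dt ft n))).
  eapply Rle_trans; [apply ntri|]. now apply Rplus_le_compat.
Qed.

Lemma grid_in n dt m : 0 < dt -> (m <= n)%nat -> 0 <= INR m * dt <= INR n * dt.
Proof.
  intros Hdt Hm. assert (0 <= INR m) by apply pos_INR. assert (INR m <= INR n) by (apply le_INR; lia).
  split; nra.
Qed.

Lemma grid_step m dt : INR (S m) * dt - INR m * dt = dt.
Proof. rewrite S_INR. ring. Qed.
End FIN.

Theorem lemma6p1 :
  forall (X : CompleteNormedModule R_AbsRing) (T : R) (p r : nat),
    0 < T -> (p = 1%nat \/ p = 2%nat) -> (1 <= r <= p)%nat ->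
    exists C : R,
      forall (dt : R) (f ft : R -> X) (d : nat -> R -> X) (n : nat),
        0 < dt ->
        Cr_0T T r f d ->
        (forall t, 0 <= t <= T -> cont_within_0T T ft t) ->
        (forall k, (k < r)%nat -> d k 0 = zero) ->
        ft 0 = zero ->
        INR n * dt <= T ->
        forall M1 M2 : R,
          (forall tau, 0 <= tau <= INR n * dt -> norm (d r tau) <= M1) ->
          (forall tau, 0 <= tau <= INR n * dt -> norm (minus (f tau) (ft tau)) <= M2) ->
          norm (minus (RInt f 0 (INR n * dt)) (cq_inv p dt ft n))
            <= C * (INR n * dt) * (dt ^ r * M1 + M2).
Proof.
  intros X T p r HT Hp Hr. exists 2.
  intros dt f ft d n Hdt HCr Hftc Hdk Hft0 HnT M1 M2 HM1 HM2.
  destruct HCr as [Hf [Hder _]].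
  assert (Ef : f = d 0%nat) by (apply functional_extensionality; intros t; symmetry; apply Hf).
  subst f.
  assert (Hn0 : 0 <= INR n) by apply pos_INR.
  assert (HtN0 : 0 <= INR n * dt) by nra.
  assert (HM10 : 0 <= M1) by (eapply Rle_trans; [apply (nge0 (d r 0))| apply HM1; lra]).
  assert (HM20 : 0 <= M2) by (eapply Rle_trans; [apply (nge0 (minus (d 0%nat 0) (ft 0)))| apply HM2; lra]).
  assert (Hg0 : d 0%nat 0 = zero) by (apply Hdk; lia).
  assert (Hd : forall k, (k < r)%nat -> forall u, 0 <= u <= INR n * dt ->
     deriv_within_0T T (d k) (d (S k)) u) by (intros; apply Hder; auto; lra).
  assert (Hdiff := diff_bound p dt (d 0%nat) ft n M2 Hp Hdt Hg0 Hft0 HM2).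
  assert (Setup : forall L, 0 <= L ->
     (forall u w, 0 <= u <= INR n * dt -> 0 <= w <= INR n * dt ->
        norm (minus (d 0%nat u) (d 0%nat w)) <= L * Rabs (u - w)) ->
     let F := fun x => d 0%nat (clamp (INR n * dt) x) in
     Lip F L /\ (forall m, (m <= n)%nat -> F (INR m * dt) = d 0%nat (INR m * dt)) /\
     (forall s, 0 <= s <= INR n * dt -> F s = d 0%nat s) /\
     RInt (d 0%nat) 0 (INR n * dt) = RInt F 0 (INR n * dt)).
  { intros L HL Hlip F. split; [apply lip_clamp; auto|]. split; [|split].
    - intros m Hm. unfold F. rewrite clamp_id; auto. apply grid_in; auto.
    - intros s Hs. unfold F. rewrite clamp_id; auto.
    - apply RInt_ext. intros x Hx. rewrite Rmin_left, Rmax_right in Hx by lra.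
      unfold F. rewrite clamp_id; auto; lra. }
  destruct Hp as [-> | ->].
  -
    assert (r = 1%nat) by lia. subst r.
    assert (Hlip := lipd T (d 0%nat) (d 1%nat) M1 (INR n * dt) HtN0 HnT
      (Hd 0%nat ltac:(lia)) HM1).
    destruct (Setup M1 HM10 Hlip) as [HF [Hgrid [_ HR]]].
    assert (H1 := err1 _ (d 0%nat) M1 dt n Hdt HM10 HF Hg0 Hgrid).
    assert (H := assemble 1 (d 0%nat) ft _ n dt _ M2 H1 HR Hdiff).
    eapply Rle_trans; [exact H|].
    assert (0 <= INR n * dt * dt * M1) by (repeat apply Rmult_le_pos; lra).
    assert (0 <= INR n * dt * M2) by (repeat apply Rmult_le_pos; lra).
    simpl. nra.
  - assert (Hr2 : r = 1%nat \/ r = 2%nat) by lia.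
    destruct Hr2 as [-> | ->].
    +
      assert (Hlip := lipd T (d 0%nat) (d 1%nat) M1 (INR n * dt) HtN0 HnT
        (Hd 0%nat ltac:(lia)) HM1).
      destruct (Setup M1 HM10 Hlip) as [HF [Hgrid [_ HR]]].
      assert (H2 := err2 _ (d 0%nat) M1 dt n (M1 * dt * dt) (dt / 6 * (M1 * dt)) Hdt HM10 HF Hg0
        ltac:(repeat apply Rmult_le_pos; lra) ltac:(repeat apply Rmult_le_pos; lra) Hgrid).
      destruct H2 as [H2 _].
      { intros m Hm.
        assert (Hab : INR m * dt <= INR (S m) * dt) by (rewrite S_INR; lra).
        assert (H := le_trap _ M1 _ _ HM10 HF Hab).
        rewrite grid_step in H. rewrite <- (Hgrid m), <- (Hgrid (S m)) by lia. exact H. }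
      { intros m Hm. eapply Rle_trans; [apply nsc; lra|].
        apply Rmult_le_compat_l; [lra|]. eapply Rle_trans; [apply Hlip; apply grid_in; auto; lia|].
        right. f_equal. replace (INR m * dt - INR (S m) * dt) with (- dt) by (rewrite S_INR; ring).
        rewrite Rabs_Ropp. apply Rabs_right; lra. }
      assert (H := assemble 2 (d 0%nat) ft _ n dt _ M2 H2 HR Hdiff).
      eapply Rle_trans; [exact H|].
      assert (0 <= INR n * dt * dt * M1) by (repeat apply Rmult_le_pos; lra).
      assert (0 <= INR n * dt * M2) by (repeat apply Rmult_le_pos; lra).
      simpl. nra.
    +
      assert (H1lip := lipd T (d 1%nat) (d 2%nat) M1 (INR n * dt) HtN0 HnT
        (Hd 1%nat ltac:(lia)) HM1).
      assert (Hd10 : d 1%nat 0 = zero) by (apply Hdk; lia).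
      assert (Hd1b : forall u, 0 <= u <= INR n * dt -> norm (d 1%nat u) <= M1 * (INR n * dt)).
      { intros u Hu. assert (H := H1lip u 0 Hu ltac:(lra)). rewrite Hd10 in H.
        eapply Rle_trans; [|eapply Rle_trans; [exact H|]].
        - right. f_equal. mod_eq.
        - apply Rmult_le_compat_l; [lra|]. rewrite Rminus_0_r, Rabs_right; lra. }
      set (L := M1 * (INR n * dt)).
      assert (HL0 : 0 <= L) by (unfold L; nra).
      assert (Hlip := lipd T (d 0%nat) (d 1%nat) L (INR n * dt) HtN0 HnT
        (Hd 0%nat ltac:(lia)) Hd1b).
      destruct (Setup L HL0 Hlip) as [HF [Hgrid [HFs HR]]].
      assert (Htay := taylor T (d 0%nat) (d 1%nat) (d 2%nat) M1 (INR n * dt) HtN0 HnT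
        (Hd 0%nat ltac:(lia)) H1lip).
      assert (H2 := err2 _ (d 0%nat) L dt n (3 / 2 * M1 * dt ^ 3) (dt / 6 * (L * dt)) Hdt HL0 HF Hg0
        ltac:(assert (0 <= dt ^ 3) by (apply pow_le; lra); repeat apply Rmult_le_pos; lra)
        ltac:(repeat apply Rmult_le_pos; lra) Hgrid).
      destruct H2 as [_ H2].
      { intros m Hm.
        assert (Hab : INR m * dt <= INR (S m) * dt) by (rewrite S_INR; lra).
        assert (Hgm := grid_in n dt m Hdt ltac:(lia)).
        assert (HgSm := grid_in n dt (S m) Hdt ltac:(lia)).
        assert (H := le_trap2 _ (d 0%nat) (d 1%nat) L M1 _ _ HL0 HF Hab HM10
          ltac:(intros s Hs; apply HFs; lra)
          ltac:(intros c s Hc Hs; apply Htay; lra)).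
        rewrite grid_step in H. rewrite <- (Hgrid m), <- (Hgrid (S m)) by lia. apply H.
        eapply Rle_trans; [apply H1lip; lra|]. apply Rmult_le_compat_l; [lra|].
        replace (INR m * dt - INR (S m) * dt) with (- dt) by (rewrite S_INR; ring).
        rewrite Rabs_Ropp. right. apply Rabs_right; lra. }
      { intros m Hm. eapply Rle_trans; [apply nsc; lra|].
        apply Rmult_le_compat_l; [lra|]. eapply Rle_trans; [apply Hlip; apply grid_in; auto; lia|].
        right. f_equal. replace (INR m * dt - INR (S m) * dt) with (- dt) by (rewrite S_INR; ring).
        rewrite Rabs_Ropp. apply Rabs_right; lra. }
      assert (H := assemble 2 (d 0%nat) ft _ n dt _ M2 H2 HR Hdiff).
      eapply Rle_trans; [exact H|]. unfold L.
      assert (0 <= INR n * dt * dt * dt * M1) by (repeat apply Rmult_le_pos; lra).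
      assert (0 <= INR n * dt * M2) by (repeat apply Rmult_le_pos; lra).
      simpl. nra.
Qed.
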